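(* Let $q$ be an odd prime power and let $f:\mathbb{F}_q\to\mathbb{F}_q$, $f(x)=x^2$, viewed as a function on the additive group of the finite field $\mathbb{F}_q$. Then $\mathrm{pres}(f)\le \lceil 2\sqrt{q-1}\rceil-1$.
   Context: For a function $g:\mathbb{F}_q\to\mathbb{F}_q$, $V(g)=\#\{g(x):x\in\mathbb{F}_q\}$. The permutation resemblance of $f$ is $\mathrm{pres}(f)=\min\{V(g): g:\mathbb{F}_q\to\mathbb{F}_q,\ x\mapsto g(x)+f(x) \text{ is a bijection of } \mathbb{F}_q\}$. *)

(* Defs.v *)
From mathcomp Require Import all_boot all_order all_algebra all_field.
Set Implicit Arguments. Unset Strict Implicit. Unset Printing Implicit Defensive.
Import GRing.Theory.
Local Open Scope ring_scope.

Definition Vcard (F : finFieldType) (g : F -> F) : nat := #|[set g x | x : F]|.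

(* The minimum is over all functions g : F -> F (represented as finite functions);
   the set is nonempty (g = -f + id) and V(g) <= #|F|, so #|F| is a neutral default. *)
Definition pres (F : finFieldType) (f : F -> F) : nat :=
  \big[minn/#|F|]_(g : {ffun F -> F} | injectiveb (fun x => g x + f x)) Vcard g.

(* ceil(2 sqrt(m)) = least n : nat with 4 m <= n^2 *)
Lemma ceil2sqrt_ex (m : nat) : exists n : nat, (4 * m <= n ^ 2)%N.
Proof. exists (4 * m)%N; case: m => [|m] //; rewrite expnS expn1 leq_pmulr //. Qed.

Definition ceil2sqrt (m : nat) : nat := ex_minn (ceil2sqrt_ex m).

(* Main.v *)
Require Import Defs.
From mathcomp Require Import all_boot all_order all_algebra all_field zify.
Set Implicit Arguments. Unset Strict Implicit. Unset Printing Implicit Defensive.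
Import GRing.Theory.

Lemma ar1 s m M r : (0 < s)%N -> (s * m <= M)%N -> (m * m <= r * M)%N -> (r <= m)%N -> ((s+1) * (m-r) <= M)%N.
Proof. move=> *; nia. Qed.
Lemma ar2 L M : (2 <= M)%N -> (4 * M <= L^2)%N -> let T := (L.+1 %/ 2)%N in (2 <= T)%N /\ (M <= T * (L - T))%N.
Proof. move=> h1 h2 /=. split; nia. Qed.

Section G.
Variable F : finFieldType.

Definition good (D N : {set F}) (k : nat) := exists beta : F -> F,
  [/\ {in D &, injective beta}, {in D, forall d, beta d \in N} &
      leq #|[set (beta d - d)%R | d in D]| k].

Definition Dc (D N : {set F}) c := [set d in D | (d + c)%R \in N].
Definition D' (D N : {set F}) c := D :\: Dc D N c.
Definition N' (D N : {set F}) c := N :\: [set (d + c)%R | d in Dc D N c].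

Lemma extend (D N : {set F}) (c : F) k : good (D' D N c) (N' D N c) k -> good D N k.+1.
Proof.
case=> b [bi bN bk].
exists (fun x => if x \in Dc D N c then (x + c)%R else b x); split.
- move=> x y xD yD /=.
  case: ifP => xc; case: ifP => yc.
  + exact: addIr.
  + move=> e; have: y \in D' D N c by rewrite inE yc.
    move/bN; rewrite inE -e; case/andP=> /negP; case.
    by apply/imsetP; exists x.
  + move=> e; have: x \in D' D N c by rewrite inE xc.
    move/bN; rewrite inE e; case/andP=> /negP; case.
    by apply/imsetP; exists y.
  + by apply: bi; rewrite inE ?xc ?yc.
- move=> x xD /=; case: ifP => xc.
  + by move: xc; rewrite inE; case/andP.
  + have: x \in D' D N c by rewrite inE xc.
    by move/bN; rewrite inE; case/andP.
- apply: leq_trans (_ : leq #|c |: [set (b d - d)%R | d in D' D N c]| k.+1).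
    apply: subset_leq_card; apply/subsetP=> z /imsetP [d dD ->].
    case: ifP => dc.
      by rewrite in_setU1 addrC addKr eqxx.
    by rewrite in_setU1; apply/orP; right; apply/imsetP; exists d => //; rewrite inE dc.
  by rewrite cardsU1; case: (_ \notin _) => /=; rewrite ?add1n ?add0n // ltnW.
Qed.

Lemma sizes (D N : {set F}) (c : F) : {in D, forall x, x \notin N} -> #|D| = #|N| ->
  [/\ {in D' D N c, forall x, x \notin N' D N c},
      #|D' D N c| = #|N' D N c| & #|D' D N c| = (#|D| - #|Dc D N c|)%N].
Proof.
move=> dis eq.
have sub1: Dc D N c \subset D by apply/subsetP=> x; rewrite inE; case/andP.
have sub2: [set (d + c)%R | d in Dc D N c] \subset N.
  by apply/subsetP=> x /imsetP [d]; rewrite inE => /andP [_ h] ->.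
have c2: #|[set (d + c)%R | d in Dc D N c]| = #|Dc D N c|.
  by apply: card_imset; apply: addIr.
have e1: #|D' D N c| = (#|D| - #|Dc D N c|)%N.
  by rewrite /D' cardsD (setIidPr sub1).
split => //.
- move=> x; rewrite !inE => /andP [_ xD]; apply/negP => /andP [_ xN].
  by move: (dis x xD); rewrite xN.
- by rewrite e1 /N' cardsD (setIidPr sub2) c2 eq.
Qed.

Lemma sum_Dc (D N : {set F}) : {in D, forall x, x \notin N} ->
  (\sum_(c : F) #|Dc D N c| = #|D| * #|N|)%N.
Proof.
move=> dis.
have e: forall c, #|Dc D N c| = (\sum_(d in D) ((d + c)%R \in N))%N.
  move=> c; rewrite /Dc -sum1_card.
  rewrite [RHS]big_mkcond /= [LHS]big_mkcond /=; apply: eq_bigr => d _.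
  by rewrite inE; case: (d \in D); case: ((d + c)%R \in N).
rewrite (eq_bigr _ (fun c _ => e c)) exchange_big /=.
rewrite -sum_nat_const; apply: eq_bigr => d dD.
rewrite -[X in _ = X](card_preimset N (addrI d)) -sum1_card [RHS]big_mkcond /=.
by apply: eq_bigr => c _; rewrite !inE; case: (_ \in N).
Qed.

Lemma avg (D N : {set F}) : {in D, forall x, x \notin N} -> #|D| = #|N| ->
  exists c, (#|D| * #|D| <= #|Dc D N c| * #|F|.-1)%N.
Proof.
move=> dis eq.
exists [arg max_(c > (0%R:F)) #|Dc D N c|].
have z: #|Dc D N 0%R| = 0%N.
  apply/eqP; rewrite cards_eq0; apply/eqP/setP => x; rewrite !inE addr0.
  by case xD: (x \in D) => //=; rewrite (negbTE (dis x xD)).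
have := sum_Dc dis; rewrite -eq (bigD1 (0%R:F)) //= z add0n => <-.
case: arg_maxnP => //= i _ mx.
apply: leq_trans (_ : (\sum_(c | c != 0%R) #|Dc D N i| <= _)%N).
  by apply: leq_sum => c _; apply: mx.
rewrite sum_nat_const mulnC leq_mul2l; apply/orP; right.
have : #|[pred c : F | c != 0%R]| = #|F|.-1.
  by rewrite -(cardC1 (0%R:F)); apply: eq_card => x; rewrite !inE.
by move=> ->.
Qed.

Lemma good_mono (D N : {set F}) k k' : good D N k -> (k <= k')%N -> good D N k'.
Proof. by case=> b [h1 h2 h3] kk; exists b; split => //; apply: leq_trans kk. Qed.

Lemma good0 (D N : {set F}) k : #|D| = 0%N -> good D N k.
Proof.
move/eqP; rewrite cards_eq0 => /eqP ->.
exists id; split; [by move=> x y; rewrite inE | by move=> x; rewrite inE | by rewrite imset0 cards0].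
Qed.

Lemma baseK m : forall D N : {set F}, {in D, forall x, x \notin N} -> #|D| = #|N| -> #|D| = m ->
  good D N m.
Proof.
elim/ltn_ind: m => m IH D N dis eq em.
case: (posnP m) => [m0|mpos]; first by apply: good0; rewrite em.
have [c hc] := avg dis eq.
have [dis' eq' e'] := sizes c dis eq.
have rpos: (0 < #|Dc D N c|)%N.
  case: (posnP #|Dc D N c|) => // h; move: hc; rewrite h mul0n em leqn0 muln_eq0 orbb => /eqP m0.
  by rewrite m0 in mpos.
have : good (D' D N c) (N' D N c) (m - #|Dc D N c|).
  apply: (IH _ _ (D' D N c) (N' D N c) dis' eq'); last by rewrite e' em.
  by rewrite ltn_subrL rpos mpos.
move/extend/good_mono; apply.
have : (#|Dc D N c| <= m)%N by rewrite -em subset_leq_card //; apply/subsetP=> x; rewrite inE; case/andP.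
lia.
Qed.

Lemma stepK t : forall s (D N : {set F}), {in D, forall x, x \notin N} -> #|D| = #|N| ->
  (0 < s)%N -> (s * #|D| <= #|F|.-1)%N -> good D N (t + #|F|.-1 %/ (s + t)).
Proof.
elim: t => [|t IH] s D N dis eq spos sm.
  apply: good_mono (baseK dis eq (erefl _)) _.
  by rewrite add0n addn0 leq_divRL // mulnC.
case: (posnP #|D|) => [m0|mpos]; first by apply: good0.
have [c hc] := avg dis eq.
have [dis' eq' e'] := sizes c dis eq.
have rle : (#|Dc D N c| <= #|D|)%N by rewrite subset_leq_card //; apply/subsetP=> x; rewrite inE; case/andP.
have h: ((s + 1) * #|D' D N c| <= #|F|.-1)%N.
  rewrite e'; apply: ar1 => //; by rewrite mulnC.
have := IH (s + 1)%N _ _ dis' eq' (ltn_addr _ spos) h.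
move/extend/good_mono; apply.
by rewrite addSn -addnA (addnC 1%N) addn1.
Qed.
End G.

Lemma bigmin_le (I : finType) (P : pred I) (V : I -> nat) x0 i :
  P i -> (\big[minn/x0]_(j | P j) V j <= V i)%N.
Proof.
move=> Pi; have : i \in index_enum I by rewrite mem_index_enum.
elim: (index_enum I) => // j r IH; rewrite inE big_cons.
case/orP=> [/eqP <-|ir]; first by rewrite Pi geq_minl.
case: (P j); last exact: IH.
by apply: leq_trans (geq_minr _ _) (IH ir).
Qed.

Lemma card_gt2 (F : finFieldType) (hodd : odd #|F|) : (2 <= #|F|.-1)%N.
Proof.
have : (2 <= #|F|)%N.
  have := max_card [set (0%R : F); 1%R]; rewrite cards2 eq_sym oner_neq0 //.
move: hodd; case: #|F| => [|[|[|n]]] //.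
Qed.

Local Open Scope ring_scope.
Theorem corollary5p1 (F : finFieldType) (hodd : odd #|F|) :
  (pres (fun x : F => x ^+ 2) <= ceil2sqrt (#|F|.-1) - 1)%N.
Proof.
set M := #|F|.-1.
set S0 := [set x : F | (enum_rank x <= enum_rank (- x)%R)%N].
have negS : forall x, x \notin S0 -> (- x)%R \in S0.
  move=> x; rewrite !inE opprK -ltnNge; exact: ltnW.
have S00 : (0%R : F) \in S0 by rewrite inE oppr0.
have injC : {in ~: S0 &, injective (fun x : F => (x ^+ 2)%R)}.
  move=> x y; rewrite !inE -!ltnNge => hx hy /eqP; rewrite eqf_sqr.
  case/orP=> /eqP // e; move: hx hy; rewrite e opprK => h1 h2.
  by have := ltn_trans h1 h2; rewrite ltnn.
have injS : {in S0 &, injective (fun x : F => (x ^+ 2)%R)}.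
  move=> x y; rewrite !inE => hx hy /eqP; rewrite eqf_sqr.
  case/orP=> /eqP // e; move: hx hy; rewrite e opprK => h1 h2.
  have : enum_rank y = enum_rank (- y)%R by apply: val_inj; apply/eqP; rewrite eqn_leq h1 h2.
  by move/enum_rank_inj => <-.
set sq := [set (x ^+ 2)%R | x : F].
have sqE : sq = [set (x ^+ 2)%R | x in S0].
  apply/setP=> z; apply/imsetP/imsetP => [[x _ ->]|[x _ ->]]; last by exists x.
  case xS: (x \in S0); first by exists x.
  by exists (- x)%R; [apply: negS; rewrite xS | rewrite sqrrN].
set D := [set (x ^+ 2)%R | x in ~: S0].
set N := ~: sq.
have cD : #|D| = #|~: S0| by rewrite card_in_imset.
have cN : #|N| = #|~: S0|.
  have := cardsC sq; have := cardsC S0; rewrite /N sqE card_in_imset // => h1 h2.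
  by apply: (@addnI #|S0|); rewrite h2 h1.
have dis : {in D, forall x, x \notin N}.
  by move=> z /imsetP [x _ ->]; rewrite inE negbK; apply/imsetP; exists x.
have c2 : (2 * #|D| <= M)%N.
  have h1 : (#|~: S0| <= #|S0 :\ 0%R|)%N.
    rewrite -(card_imset _ (@oppr_inj F)); apply: subset_leq_card.
    apply/subsetP=> z /imsetP [x xS ->]; rewrite in_setD1; apply/andP; split.
      by rewrite oppr_eq0; apply/negP => /eqP e; move: xS; rewrite e inE S00.
    by apply: negS; rewrite inE in xS.
  have h2 : (#|S0| + #|~: S0| = M.+1)%N.
    by rewrite cardsC /M prednK //; apply/card_gt0P; exists 0%R.
  have h3 : #|S0 :\ 0%R| = #|S0|.-1 by rewrite (cardsD1 0%R S0) S00.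
  rewrite cD; rewrite -subn1 in h3; lia.
have eqDN : #|D| = #|N| by rewrite cD cN.
have Mge2 : (2 <= M)%N by exact: card_gt2.
rewrite /ceil2sqrt; case: ex_minnP => L hL _.
have [T2 TM] := ar2 Mge2 hL.
move: T2 TM; set T := (L.+1 %/ 2)%N => T2 TM.
have [b [bi bN bk]] := stepK (T - 2) dis eqDN (isT : (0 < 2)%N) c2.
pose g := [ffun x : F => (if x \in S0 then x ^+ 2 else b (x ^+ 2)) - x ^+ 2].
have ginj : injectiveb (fun x => g x + x ^+ 2).
  apply/injectiveP => x y; rewrite !ffunE !subrK.
  have sqx : forall z : F, z ^+ 2 \notin N by move=> z; rewrite inE negbK; apply/imsetP; exists z.
  have inD : forall z : F, z \notin S0 -> z ^+ 2 \in D.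
    by move=> z zS; apply/imsetP; exists z => //; rewrite inE.
  case: ifP => xS; case: ifP => yS.
  - by apply: injS.
  - by move=> e; have := bN _ (inD _ (negbT yS)); rewrite -e (negbTE (sqx x)).
  - by move=> e; have := bN _ (inD _ (negbT xS)); rewrite e (negbTE (sqx y)).
  - move=> e; apply: injC; rewrite ?in_setC ?xS ?yS //.
    by apply: bi e; apply: inD; rewrite ?xS ?yS.
rewrite /pres.
apply: leq_trans (@bigmin_le _ (fun g : {ffun F -> F} => injectiveb (fun x => g x + x ^+ 2)) (fun g => Vcard g) _ g ginj) _.
rewrite /Vcard.
apply: (@leq_trans #|0 |: [set b d - d | d in D]|).
  apply: subset_leq_card; apply/subsetP => z /imsetP [x _ ->]; rewrite ffunE.
  rewrite in_setU1; case: ifP => xS; first by rewrite subrr eqxx.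
  apply/orP; right; apply/imsetP; exists (x ^+ 2) => //.
  by apply/imsetP; exists x => //; rewrite inE xS.
rewrite cardsU1.
have e2 : (2 + (T - 2) = T)%N by rewrite subnKC.
rewrite e2 in bk.
have hd : (M %/ T <= L - T)%N.
  apply: leq_trans (leq_div2r T TM) _.
  by rewrite mulKn // (leq_trans _ T2).
have : (1 <= L - T)%N.
  rewrite lt0n; apply/negP => /eqP h; move: TM; rewrite h muln0 leqn0 => /eqP M0.
  by rewrite M0 in Mge2.
move=> hLT.
have hc : leq #|[set b d - d | d in D]| (L - 2).
  apply: leq_trans bk _; apply: (@leq_trans (T - 2 + (L - T))).
    by rewrite leq_add2l; exact: hd.
  clearbody T; lia.
move: hc; case: (_ \notin _) => /=; move: (#|_|) => c; clear -T2 hLT; lia.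
Qed.
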